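(* Let $X\in\mathbb{R}^{m\times n}$ with $m\geq n$, and let $X=U\Sigma V^\top$ be a singular value decomposition, where $U\in\mathbb{R}^{m\times m}$ and $V\in\mathbb{R}^{n\times n}$ satisfy $U^\top U=I$, $V^\top V=I$, and $\Sigma\in\mathbb{R}^{m\times n}$ is diagonal with diagonal entries $\sigma_i=\Sigma_{ii}$, $i=1,\dots,n$, which are nonzero and pairwise distinct in absolute value. Let $dX\in\mathbb{R}^{m\times n}$ be a variation of $X$ and $(dU,d\Sigma,dV)$ the induced variation of the SVD factors. Then $$d\Sigma=(U^\top dX\,V)_{diag},\qquad dV=2V\left(K^\top\circ(\Sigma^\top U^\top dX\, V)_{sym}\right),$$ where $K\in\mathbb{R}^{n\times n}$ is given by $K_{ij}=\frac{1}{\sigma_i^2-\sigma_j^2}$ for $i\neq j$ and $K_{ii}=0$. Moreover, writing $\Sigma_n\in\mathbb{R}^{n\times n}$ for the top $n$ rows of $\Sigma$, $U=(U_1\,|\,U_2)$ with $U_1\in\mathbb{R}^{m\times n}$, $U_2\in\mathbb{R}^{m\times(m-n)}$, and $dU=(dU_1\,|\,dU_2)$ with the same block sizes, $$dU=\bigl(C\Sigma_n^{-1}\,\big|\,-U_1\Sigma_n^{-1}C^\top U_2\bigr),\qquad C=dX\,V-U\,d\Sigma-U\Sigma\, dV^\top V.$$ Consequently, for a scalar function $L$ of $(U,\Sigma,V)$ with partial derivatives $\frac{\partial L}{\partial U},\frac{\partial L}{\partial \Sigma},\frac{\partial L}{\partial V}$, writing $\frac{\partial L}{\partial U}=\left(\left(\frac{\partial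 L}{\partial U}\right)_1\,\middle|\,\left(\frac{\partial L}{\partial U}\right)_2\right)$ with blocks of sizes $m\times n$ and $m\times(m-n)$, the partial derivative of $L\circ f$ (where $f(X)=(U,\Sigma,V)$) with respect to $X$ is $$\frac{\partial L\circ f}{\partial X}=DV^\top+U\left(\frac{\partial L}{\partial \Sigma}-U^\top D\right)_{diag}V^\top+2U\Sigma\left(K^\top\circ\left(V^\top\left(\frac{\partial L}{\partial V}-VD^\top U\Sigma\right)\right)\right)_{sym}V^\top,$$ where $D=\left(\frac{\partial L}{\partial U}\right)_1\Sigma_n^{-1}-U_2\left(\frac{\partial L}{\partial U}\right)_2^\top U_1\Sigma_n^{-1}$.
   Context: Notation: for a square matrix $A$, $A_{sym}=\frac12(A^\top+A)$; for any matrix $A$, $A_{diag}$ is the matrix of the same size equal to $A$ on the main diagonal and $0$ elsewhere; $\circ$ is the Hadamard (entrywise) product; $A:B=\operatorname{Tr}(A^\top B)=\sum_{ij}A_{ij}B_{ij}$. Variations are first-order perturbations: given $dX$, the induced variation of the SVD factors is a triple $(dU,d\Sigma,dV)$ with $d\Sigma$ diagonal (of the same shape as $\Sigma$), $U^\top dU+dU^\top U=0$, $V^\top dV+dV^\top V=0$, and $dX=dU\,\Sigma V^\top+U\,d\Sigma\, V^\top+U\Sigma\, dV^\top$; when $m>n$, the component $U_2^\top dU_2$ (not determined by these conditions) is taken to be $0$. The partial derivative of a scalar function $L$ with respect to a matrix argument $Y$ is the matrix $\frac{\partial L}{\partial Y}$ such that the first-order change of $L$ is $\frac{\partial L}{\partial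 Y}:dY$. The claimed formula for $\frac{\partial L\circ f}{\partial X}$ means: for every $dX$ with induced $(dU,d\Sigma,dV)$, $\frac{\partial L}{\partial U}:dU+\frac{\partial L}{\partial \Sigma}:d\Sigma+\frac{\partial L}{\partial V}:dV=\frac{\partial L\circ f}{\partial X}:dX$. *)

(* Defs.v *)
From HB Require Import structures.
From mathcomp Require Import all_boot all_order all_algebra.
Set Implicit Arguments. Unset Strict Implicit. Unset Printing Implicit Defensive.
Import Order.TTheory GRing.Theory Num.Theory.
Local Open Scope ring_scope.

Section Defs.
Variable R : realFieldType.

Definition mxdiagpart m n (A : 'M[R]_(m, n)) : 'M[R]_(m, n) :=
  \matrix_(i, j) if (i : nat) == (j : nat) then A i j else 0.

Definition is_rdiag m n (A : 'M[R]_(m, n)) : Prop :=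
  forall (i : 'I_m) (j : 'I_n), (i : nat) <> (j : nat) -> A i j = 0.

Definition mxsym n (A : 'M[R]_n) : 'M[R]_n := 2^-1 *: (A^T + A).

Definition hadamard m n (A B : 'M[R]_(m, n)) : 'M[R]_(m, n) :=
  \matrix_(i, j) (A i j * B i j).

Definition frob m n (A B : 'M[R]_(m, n)) : R := \tr (A^T *m B).

Definition sv n p (S : 'M[R]_(n + p, n)) (i : 'I_n) : R := S (lshift p i) i.

Definition Kmx n p (S : 'M[R]_(n + p, n)) : 'M[R]_n :=
  \matrix_(i, j) if i == j then 0 else (sv S i ^+ 2 - sv S j ^+ 2)^-1.

Definition induced_variation n p (U : 'M[R]_(n + p)) (S : 'M[R]_(n + p, n))
    (V : 'M[R]_n) (dX : 'M[R]_(n + p, n))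
    (dU : 'M[R]_(n + p)) (dS : 'M[R]_(n + p, n)) (dV : 'M[R]_n) : Prop :=
  [/\ is_rdiag dS,
      U^T *m dU + dU^T *m U = 0,
      V^T *m dV + dV^T *m V = 0,
      dX = dU *m S *m V^T + U *m dS *m V^T + U *m S *m dV^T
    & (rsubmx U)^T *m rsubmx dU = 0 ].

End Defs.

(* Main.v *)
Require Import Defs.
From HB Require Import structures.
From mathcomp Require Import all_boot all_order all_algebra.
Import Order.TTheory GRing.Theory Num.Theory.
Local Open Scope ring_scope.

Set Implicit Arguments. Unset Strict Implicit.
Section H.
Variable R : realFieldType.

Lemma frobE m n (A B : 'M[R]_(m,n)) : frob A B = \sum_i \sum_j A i j * B i j.
Proof.
rewrite /frob /mxtrace [RHS]exchange_big; apply eq_bigr => j _; rewrite mxE.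
by apply eq_bigr => i _; rewrite !mxE.
Qed.

Lemma frobC m n (A B : 'M[R]_(m,n)) : frob A B = frob B A.
Proof. by rewrite !frobE; apply eq_bigr => i _; apply eq_bigr => j _; rewrite mulrC. Qed.

Lemma frobDl m n (A B C : 'M[R]_(m,n)) : frob (A + B) C = frob A C + frob B C.
Proof.
rewrite !frobE -big_split; apply eq_bigr => i _; rewrite -big_split.
by apply eq_bigr => j _; rewrite !mxE mulrDl.
Qed.

Lemma frobZl m n a (A B : 'M[R]_(m,n)) : frob (a *: A) B = a * frob A B.
Proof.
rewrite !frobE mulr_sumr; apply eq_bigr => i _; rewrite mulr_sumr.
by apply eq_bigr => j _; rewrite !mxE mulrA.
Qed.

Lemma frobNl m n (A B : 'M[R]_(m,n)) : frob (- A) B = - frob A B.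
Proof. by rewrite -scaleN1r frobZl mulN1r. Qed.

Lemma frobBl m n (A B C : 'M[R]_(m,n)) : frob (A - B) C = frob A C - frob B C.
Proof. by rewrite frobDl frobNl. Qed.

Lemma frobDr m n (A B C : 'M[R]_(m,n)) : frob C (A + B) = frob C A + frob C B.
Proof. by rewrite !(frobC C) frobDl. Qed.
Lemma frobZr m n a (A B : 'M[R]_(m,n)) : frob B (a *: A) = a * frob B A.
Proof. by rewrite !(frobC B) frobZl. Qed.
Lemma frobNr m n (A B : 'M[R]_(m,n)) : frob B (- A) = - frob B A.
Proof. by rewrite !(frobC B) frobNl. Qed.
Lemma frobBr m n (A B C : 'M[R]_(m,n)) : frob C (A - B) = frob C A - frob C B.
Proof. by rewrite frobDr frobNr. Qed.

Lemma frob_mulr m k n (A : 'M[R]_(m,n)) (B : 'M[R]_(m,k)) C :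
  frob A (B *m C) = frob (B^T *m A) C.
Proof. by rewrite /frob trmx_mul trmxK mulmxA. Qed.

Lemma frob_mull m k n (A : 'M[R]_(m,n)) (B : 'M[R]_(m,k)) C :
  frob A (B *m C) = frob (A *m C^T) B.
Proof. by rewrite /frob trmx_mul trmxK mulmxA mxtrace_mulC mulmxA. Qed.

Lemma frob_tr m n (A : 'M[R]_(m,n)) (B : 'M[R]_(n,m)) : frob A B^T = frob A^T B.
Proof.
rewrite !frobE exchange_big; apply eq_bigr => i _; apply eq_bigr => j _.
by rewrite !mxE.
Qed.

Lemma frob_diag m n (A B : 'M[R]_(m,n)) :
  frob A (mxdiagpart B) = frob (mxdiagpart A) B.
Proof.
rewrite !frobE; apply eq_bigr => i _; apply eq_bigr => j _.
by rewrite !mxE; case: ifP => _; rewrite ?mulr0 ?mul0r.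
Qed.

Lemma frob_had m n (K A B : 'M[R]_(m,n)) :
  frob A (hadamard K B) = frob (hadamard K A) B.
Proof.
rewrite !frobE; apply eq_bigr => i _; apply eq_bigr => j _.
by rewrite !mxE mulrCA mulrA.
Qed.

Lemma frob_sym n (A B : 'M[R]_n) : frob A (mxsym B) = frob (mxsym A) B.
Proof.
by rewrite /mxsym frobZr frobZl frobDr frobDl frob_tr.
Qed.

Lemma frob_row m n1 n2 (A C : 'M[R]_(m,n1)) (B D : 'M[R]_(m,n2)) :
  frob (row_mx A B) (row_mx C D) = frob A C + frob B D.
Proof. by rewrite /frob tr_row_mx mul_col_row mxtrace_block. Qed.

Variables (n p : nat) (S : 'M[R]_(n + p, n)).
Hypothesis hS : is_rdiag S.

Lemma mulS_E k (A : 'M[R]_(k, n + p)) i j :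
  (A *m S) i j = A i (lshift p j) * sv S j.
Proof.
rewrite mxE (bigD1 (lshift p j)) //= big1 ?addr0 // => l hl.
rewrite hS ?mulr0 // => e; move/eqP: hl; apply; exact: val_inj.
Qed.

Lemma StmulE k (A : 'M[R]_(n + p, k)) i j :
  (S^T *m A) i j = sv S i * A (lshift p i) j.
Proof.
rewrite mxE (bigD1 (lshift p i)) //= big1 ?addr0 ?mxE // => l hl.
rewrite mxE hS ?mul0r // => e; move/eqP: hl; apply; exact: val_inj.
Qed.

Lemma SmulE k (A : 'M[R]_(n, k)) i j :
  (S *m A) (lshift p i) j = sv S i * A i j.
Proof.
rewrite mxE (bigD1 i) //= big1 ?addr0 // => l hl.
rewrite hS ?mul0r // => e; move/eqP: hl; apply; exact: val_inj.
Qed.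

Lemma dsubS0 : dsubmx S = 0.
Proof.
apply/matrixP => i j; rewrite !mxE hS //= => e.
by move: (ltn_ord j); rewrite -e; rewrite ltnNge leq_addr.
Qed.

Lemma usubS : usubmx S = diag_mx (\row_i sv S i).
Proof.
apply/matrixP => i j; rewrite !mxE; case: eqP => [->|ne]; first by rewrite mulr1n.
by rewrite mulr0n hS //= => e; apply: ne; apply: val_inj.
Qed.

End H.

From mathcomp Require Import ring lra.

Lemma diag0 (R : realFieldType) k (M : 'M[R]_k) i : M^T = - M -> M i i = 0.
Proof. move=> h; have := congr1 (fun A : 'M[R]_k => A i i) h; rewrite !mxE => e; lra. Qed.

Lemma subE (R : realFieldType) m n1 n2 k1 k2 (A : 'M[R]_(m, n1 + n2)) (B : 'M[R]_(m, k1 + k2)) i j :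
  ((lsubmx A)^T *m rsubmx B) i j = (A^T *m B) (lshift n2 i) (rshift k1 j).
Proof. by rewrite !mxE; apply eq_bigr => l _; rewrite !mxE. Qed.

Lemma part1 (R : realFieldType) (n p : nat)
    (U : 'M[R]_(n + p)) (S : 'M[R]_(n + p, n)) (V : 'M[R]_n)
    (hU : U^T *m U = 1%:M) (hV : V^T *m V = 1%:M)
    (hSdiag : is_rdiag S)
    (hnz : forall i : 'I_n, sv S i != 0)
    (hdist : forall i j : 'I_n, i != j -> `|sv S i| != `|sv S j|)
    (dX : 'M[R]_(n + p, n)) (dU : 'M[R]_(n + p))
          (dS : 'M[R]_(n + p, n)) (dV : 'M[R]_n) :
     induced_variation U S V dX dU dS dV ->
     let C := dX *m V - U *m dS - U *m S *m dV^T *m V in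
     [/\ dS = mxdiagpart (U^T *m dX *m V),
         dV = 2%:R *: (V *m hadamard (Kmx S)^T (mxsym (S^T *m U^T *m dX *m V)))
       & dU = row_mx (C *m invmx (usubmx S)) (- (lsubmx U *m invmx (usubmx S) *m C^T *m rsubmx U))].
Proof.
case=> hdSd hOu0 hOv0 hdX h22 C.
have hUU : U *m U^T = 1%:M by apply: mulmx1C.
have hVV : V *m V^T = 1%:M by apply: mulmx1C.
set Ou := U^T *m dU; set Ov := V^T *m dV.
have hdU : dU = U *m Ou by rewrite /Ou mulmxA hUU mul1mx.
have hdV : dV = V *m Ov by rewrite /Ov mulmxA hVV mul1mx.
have hOu : Ou^T = - Ou.
  by apply/eqP; rewrite -addr_eq0 addrC /Ou trmx_mul trmxK; apply/eqP.
have hOv : Ov^T = - Ov.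
  by apply/eqP; rewrite -addr_eq0 addrC /Ov trmx_mul trmxK; apply/eqP.
have hVt : dV^T *m V = - Ov by rewrite -hOv /Ov trmx_mul trmxK.
set P := U^T *m dX *m V.
have hP : P = Ou *m S + dS - S *m Ov.
  have e1 : U^T *m (dU *m S *m V^T) *m V = Ou *m S
    by rewrite -!mulmxA hV mulmx1 !mulmxA.
  have e2 : U^T *m (U *m dS *m V^T) *m V = dS
    by rewrite -!mulmxA hV mulmx1 mulmxA hU mul1mx.
  have e3 : U^T *m (U *m S *m dV^T) *m V = - (S *m Ov)
    by rewrite -!mulmxA hVt mulmxN mulmxA hU mul1mx.
  by rewrite /P hdX !mulmxDr !mulmxDl e1 e2 e3.
have addE : forall k l (A B : 'M[R]_(k,l)) i j, (A + B) i j = A i j + B i j.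
  by move=> *; rewrite mxE.
have oppE : forall k l (A : 'M[R]_(k,l)) i j, (- A) i j = - A i j.
  by move=> *; rewrite mxE.
split.
- apply/matrixP => i j; rewrite /mxdiagpart mxE; case: eqP => e.
  + have ei : i = lshift p j by apply: val_inj.
    rewrite hP ei !(addE, oppE) mulS_E // SmulE // (diag0 _ hOu) (diag0 _ hOv).
    by rewrite mul0r mulr0 add0r subr0.
  + by rewrite hdSd.
- have hsq : forall i j : 'I_n, i != j -> sv S j ^+ 2 - sv S i ^+ 2 != 0.
    move=> i j hij; rewrite subr_sqr mulf_neq0 //.
      rewrite subr_eq0; apply/eqP => e; move: (hdist _ _ hij); by rewrite e eqxx.
    rewrite addr_eq0; apply/eqP => e; move: (hdist _ _ hij); by rewrite e normrN eqxx.
  have hSP : forall i j, (S^T *m P) i j = sv S i * Ou (lshift p i) (lshift p j) * sv S j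
      + sv S i * dS (lshift p i) j - sv S i ^+ 2 * Ov i j.
    by move=> i j; rewrite StmulE // hP !(addE, oppE) mulS_E // SmulE //; ring.
  have trE : forall k l (A : 'M[R]_(k,l)) i j, A^T i j = A j i.
    by move=> *; rewrite mxE.
  have scE : forall k l a (A : 'M[R]_(k,l)) i j, (a *: A) i j = a * A i j.
    by move=> *; rewrite mxE.
  have hOuE : forall a b, Ou b a = - Ou a b.
    by move=> a b; rewrite -trE hOu oppE.
  have hOvE : forall a b, Ov b a = - Ov a b.
    by move=> a b; rewrite -trE hOv oppE.
  rewrite {1}hdV scalemxAr; congr (_ *m _).
  have -> : S^T *m U^T *m dX *m V = S^T *m P by rewrite /P !mulmxA.
  apply/matrixP => i j; rewrite [RHS]mxE /hadamard [X in _ * X]mxE /mxsym [X in _ * (_ * X)]mxE addE !trE hSP hSP.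
  rewrite /Kmx [X in 2 * (X * _)]mxE.
  case: (eqVneq i j) => [<-|hij].
    by rewrite (diag0 _ hOv) mul0r mulr0.
  rewrite (hOuE (lshift p i)) (hOvE i).
  have nij : (i : nat) <> (j : nat) by move=> e; move/eqP: hij; apply; apply: val_inj.
  rewrite !hdSd //=; last by move=> e; apply: nij.
  have := hsq _ _ hij; move: (sv S i) (sv S j) (Ov i j) (Ou (lshift p i) (lshift p j)) => a b c d h.
  by field.
- have hC : C = lsubmx dU *m usubmx S.
    have e1 : dX *m V = U *m P by rewrite /P !mulmxA hUU mul1mx.
    have e2 : U *m S *m dV^T *m V = - (U *m S *m Ov) by rewrite -mulmxA hVt mulmxN.
    have -> : C = dU *m S.
      rewrite /C e1 e2 hP hdU !mulmxDr !mulmxN !mulmxA.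
      have zl : forall (W : zmodType) (a b c : W), a + b - c - b - - c = a.
        by move=> W a b c; rewrite opprK (addrAC (a + b)) addrK subrK.
      by rewrite zl.
    by rewrite -{1}[dU](hsubmxK dU) -{1}[S](vsubmxK S) mul_row_col dsubS0 // mulmx0 addr0.
  have hSn : usubmx S = diag_mx (\row_i sv S i) := usubS hSdiag.
  have hSnT : (usubmx S)^T = usubmx S by rewrite hSn tr_diag_mx.
  have hunit : usubmx S \in unitmx.
    rewrite unitmxE hSn det_diag unitfE; apply/prodf_neq0 => i _; rewrite mxE; exact: hnz.
  have key : (lsubmx U)^T *m rsubmx dU = - ((lsubmx dU)^T *m rsubmx U).
    apply/matrixP => i k; rewrite oppE !subE -/Ou.
    have -> : dU^T *m U = Ou^T by rewrite /Ou trmx_mul trmxK.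
    by rewrite hOu oppE opprK.
  rewrite hC mulmxK // trmx_mul hSnT !mulmxA mulmxKV //.
  rewrite -{1}[dU](hsubmxK dU); congr row_mx.
  have hUU' : U *m U^T = lsubmx U *m (lsubmx U)^T + rsubmx U *m (rsubmx U)^T.
    by rewrite -{1 2}[U](hsubmxK U) tr_row_mx mul_row_col.
  rewrite -[rsubmx dU]mul1mx -hUU hUU' mulmxDl -!mulmxA key h22 mulmx0 addr0.
  by rewrite mulmxN !mulmxA.
Qed.

Unset Implicit Arguments.
Set Strict Implicit.

Theorem proposition1 (R : realFieldType) (n p : nat)
    (X : 'M[R]_(n + p, n)) (U : 'M[R]_(n + p)) (S : 'M[R]_(n + p, n))
    (V : 'M[R]_n)
    (hU : U^T *m U = 1%:M) (hV : V^T *m V = 1%:M)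
    (hX : X = U *m S *m V^T)
    (hSdiag : is_rdiag S)
    (hnz : forall i : 'I_n, sv S i != 0)
    (hdist : forall i j : 'I_n, i != j -> `|sv S i| != `|sv S j|) :
  let K := Kmx S in
  let Sn := usubmx S : 'M[R]_n in
  let U1 := lsubmx U : 'M[R]_(n + p, n) in
  let U2 := rsubmx U : 'M[R]_(n + p, p) in
  (forall (dX : 'M[R]_(n + p, n)) (dU : 'M[R]_(n + p))
          (dS : 'M[R]_(n + p, n)) (dV : 'M[R]_n),
     induced_variation U S V dX dU dS dV ->
     let C := dX *m V - U *m dS - U *m S *m dV^T *m V in
     [/\ dS = mxdiagpart (U^T *m dX *m V),
         dV = 2%:R *: (V *m hadamard K^T (mxsym (S^T *m U^T *m dX *m V)))
       & dU = row_mx (C *m invmx Sn) (- (U1 *m invmx Sn *m C^T *m U2))])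
  /\
  (forall (GU : 'M[R]_(n + p)) (GS : 'M[R]_(n + p, n)) (GV : 'M[R]_n),
     let D := lsubmx GU *m invmx Sn
              - U2 *m (rsubmx GU)^T *m U1 *m invmx Sn in
     let G := D *m V^T
              + U *m mxdiagpart (GS - U^T *m D) *m V^T
              + 2%:R *: (U *m S *m mxsym (hadamard K^T
                           (V^T *m (GV - V *m D^T *m U *m S))) *m V^T) in
     forall (dX : 'M[R]_(n + p, n)) (dU : 'M[R]_(n + p))
            (dS : 'M[R]_(n + p, n)) (dV : 'M[R]_n),
       induced_variation U S V dX dU dS dV ->
       frob GU dU + frob GS dS + frob GV dV = frob G dX).
Proof.
move=> K Sn U1 U2.
have P1 := part1 hU hV hSdiag hnz hdist.
split; first exact: P1.
move=> GU GS GV D G dX dU dS dV hiv.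
case: (P1 dX dU dS dV hiv) => hdS hdV hdU.
set C := dX *m V - U *m dS - U *m S *m dV^T *m V in hdU.
rewrite -/Sn -/U1 -/U2 in hdU; rewrite -/K in hdV.
have hSnT : Sn^T = Sn by rewrite /Sn (usubS hSdiag) tr_diag_mx.
have hiT : (invmx Sn)^T = invmx Sn by rewrite trmx_inv hSnT.
have step1 : frob GU dU = frob D C.
  rewrite hdU -[GU](hsubmxK GU) frob_row /D frobBl frob_mull trmx_inv hSnT frobNr.
  rewrite frob_mull frob_mulr frob_tr.
  congr (_ - frob _ _).
  by rewrite !trmx_mul !trmxK !mulmxA.
have step2 : frob D C = frob (D *m V^T) dX - frob (U^T *m D) dS
                        - frob (V *m D^T *m U *m S) dV.
  rewrite /C !frobBr frob_mull frob_mulr; congr (_ - _ - _).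
  rewrite frob_mull frob_mulr frob_tr; congr frob.
  by rewrite !trmx_mul !trmxK !mulmxA.
have step3 : forall A, frob A dS = frob (U *m mxdiagpart A *m V^T) dX.
  move=> A; rewrite hdS frob_diag frob_mull frob_mulr trmxK.
  by rewrite !mulmxA.
have step4 : forall B, frob B dV = frob (2%:R *: (U *m S *m mxsym (hadamard K^T
                           (V^T *m B)) *m V^T)) dX.
  move=> B; rewrite hdV frobZr frobZl frob_mulr frob_had frob_sym.
  rewrite frob_mull frob_mulr !trmx_mul !trmxK.
  by rewrite !mulmxA.
rewrite step1 step2 /G !frobDl -step3 -step4 !frobBl.
ring.
Qed.
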